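(* Let $\Phi:\mathbb{R}^N\to\mathbb{R}^M$ and $L:\mathbb{R}^P\to\mathbb{R}^N$ be linear operators, let $\|\cdot\|_A$ be a norm on $\mathbb{R}^P$ with dual norm $\|\cdot\|_A^*$, and set $R(x)=\|L^*x\|_A$. Let $y\in\mathbb{R}^M$, $\lambda>0$, and let $x^\star$ be a minimizer of $$\min_{x\in\mathbb{R}^N}\ \tfrac12\|y-\Phi x\|_2^2+\lambda R(x).$$ Assume $\|\cdot\|_A$ is decomposable at $u^\star=L^*x^\star$, with associated subspace $T$ and vector $e\in T$, and let $S=T^\perp$. If $$\langle L_T^*h,\,e\rangle<\|L_S^*h\|_A\qquad\text{for all } h\in\ker(\Phi)\setminus\{0\},$$ then $x^\star$ is the unique minimizer of this problem.
   Context: For a subspace $V\subset\mathbb{R}^P$, $P_V$ denotes the orthogonal projector onto $V$, and $L_V=LP_V$, $L_V^*=P_VL^*$, $\alpha_V=P_V\alpha$ for $\alpha\in\mathbb{R}^P$. A norm $\|\cdot\|_A$ on $\mathbb{R}^P$ is decomposable at $u\in\mathbb{R}^P$ if (i) there exist a subspace $T\subset\mathbb{R}^P$ and a vector $e\in T$ such that the subdifferential of $\|\cdot\|_A$ at $u$ is $\partial\|\cdot\|_A(u)=\{\alpha\in\mathbb{R}^P:\ \alpha_T=e,\ \|\alpha_{T^\perp}\|_A^*\le 1\}$, and (ii) for every $z\in T^\perp$, $\|z\|_A=\sup\{\langle v,z\rangle: v\in T^\perp,\ \|v\|_A^*\le 1\}$. *)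

(* Defs.v *)
From HB Require Import structures.
From mathcomp Require Import all_boot all_order all_algebra.
From mathcomp Require Import classical_sets reals.
Set Implicit Arguments. Unset Strict Implicit. Unset Printing Implicit Defensive.
Import Order.TTheory GRing.Theory Num.Theory.
Local Open Scope ring_scope.
Local Open Scope classical_set_scope.

Definition dotv (R : realType) (n : nat) (u v : 'cV[R]_n) : R :=
  \sum_(i < n) u i 0 * v i 0.

Definition is_norm (R : realType) (n : nat) (f : 'cV[R]_n -> R) : Prop :=
  [/\ (forall x, f x = 0 -> x = 0),
      (forall (a : R) x, f (a *: x) = `|a| * f x) &
      (forall x y, f (x + y) <= f x + f y)].

Definition dual_norm (R : realType) (n : nat) (f : 'cV[R]_n -> R) (z : 'cV[R]_n) : R :=
  sup [set dotv v z | v in [set v | f v <= 1]].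

Definition subdiff (R : realType) (n : nat) (f : 'cV[R]_n -> R) (u : 'cV[R]_n)
  : set 'cV[R]_n :=
  [set a | forall w, f u + dotv a (w - u) <= f w].

(* PT is the orthogonal projector onto a subspace T (T = range PT). *)
Definition orth_proj (R : realType) (n : nat) (PT : 'M[R]_n) : Prop :=
  PT^T = PT /\ PT *m PT = PT.

(* Decomposability of the norm f at u, with subspace T (given by its
   orthogonal projector PT; P_{T^perp} = 1 - PT) and vector e in T. *)
Definition decomposable_at (R : realType) (n : nat) (f : 'cV[R]_n -> R)
  (u : 'cV[R]_n) (PT : 'M[R]_n) (e : 'cV[R]_n) : Prop :=
  [/\ orth_proj PT,
      PT *m e = e,
      subdiff f u = [set a | PT *m a = e /\ dual_norm f ((1%:M - PT) *m a) <= 1] &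
      (forall z, (1%:M - PT) *m z = z ->
         f z = sup [set dotv v z | v in
                     [set v | (1%:M - PT) *m v = v /\ dual_norm f v <= 1]])].

Definition objective (R : realType) (M N P : nat) (Phi : 'M[R]_(M, N))
  (L : 'M[R]_(N, P)) (f : 'cV[R]_P -> R) (y : 'cV[R]_M) (lam : R)
  (x : 'cV[R]_N) : R :=
  2^-1 * dotv (y - Phi *m x) (y - Phi *m x) + lam * f (L^T *m x).

Definition is_minimizer (R : realType) (N : nat) (J : 'cV[R]_N -> R)
  (x : 'cV[R]_N) : Prop := forall z, J x <= J z.

(* Main.v *)
Require Import Defs.
From HB Require Import structures.
From mathcomp Require Import all_boot all_order all_algebra.
From mathcomp Require Import classical_sets reals.
From mathcomp Require Import ring lra.
Import Order.TTheory GRing.Theory Num.Theory.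
Local Open Scope ring_scope.

Section Aux.
Variable R : realType.
Variable n : nat.
Implicit Types u v w : 'cV[R]_n.

Lemma dotvE u v : dotv u v = (u^T *m v) 0 0.
Proof. by rewrite /dotv !mxE; apply: eq_bigr => i _; rewrite mxE. Qed.

Lemma dotvC u v : dotv u v = dotv v u.
Proof. by rewrite /dotv; apply: eq_bigr => i _; rewrite mulrC. Qed.

Lemma dotvDl u w v : dotv (u + w) v = dotv u v + dotv w v.
Proof. by rewrite /dotv -big_split; apply: eq_bigr => i _; rewrite mxE mulrDl. Qed.

Lemma dotvZl (a : R) u v : dotv (a *: u) v = a * dotv u v.
Proof. by rewrite /dotv mulr_sumr; apply: eq_bigr => i _; rewrite mxE mulrA. Qed.

Lemma dotvNl u v : dotv (- u) v = - dotv u v.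
Proof. by rewrite -scaleN1r dotvZl mulN1r. Qed.

Lemma dotvDr u w v : dotv v (u + w) = dotv v u + dotv v w.
Proof. by rewrite dotvC dotvDl !(dotvC v). Qed.

Lemma dotvZr (a : R) u v : dotv v (a *: u) = a * dotv v u.
Proof. by rewrite dotvC dotvZl dotvC. Qed.

Lemma dotvNr u v : dotv v (- u) = - dotv v u.
Proof. by rewrite dotvC dotvNl dotvC. Qed.

Lemma dotv0r v : dotv v 0 = 0.
Proof. by rewrite -(scale0r (0 : 'cV[R]_n)) dotvZr mul0r. Qed.

Lemma dotv_mull (A : 'M[R]_n) u v : dotv (A *m u) v = dotv u (A^T *m v).
Proof. by rewrite !dotvE trmx_mul mulmxA. Qed.

Lemma dotv_ge0 u : 0 <= dotv u u.
Proof. by apply: sumr_ge0 => i _; rewrite -expr2 sqr_ge0. Qed.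

Lemma dotv_eq0 u : dotv u u = 0 -> u = 0.
Proof.
move=> H; apply/matrixP => i j; rewrite (ord1 j) mxE.
have P0 : forall k : 'I_n, true -> 0 <= u k 0 * u k 0.
  by move=> k _; rewrite -expr2 sqr_ge0.
have := psumr_eq0P P0 H (i:=i) isT.
by move/eqP; rewrite mulf_eq0 orbb => /eqP.
Qed.
End Aux.
Arguments dotvE {R n}.
Arguments dotvC {R n}.
Arguments dotvDl {R n}.
Arguments dotvZl {R n}.
Arguments dotvNl {R n}.
Arguments dotvDr {R n}.
Arguments dotvZr {R n}.
Arguments dotvNr {R n}.
Arguments dotv0r {R n}.
Arguments dotv_mull {R n}.
Arguments dotv_ge0 {R n}.
Arguments dotv_eq0 {R n}.

Lemma dotv_par (R : realType) n (a b : 'cV[R]_n) :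
  dotv (2^-1 *: (a + b)) (2^-1 *: (a + b)) =
  2^-1 * dotv a a + 2^-1 * dotv b b - 4^-1 * dotv (a - b) (a - b).
Proof.
rewrite !(dotvZl, dotvZr, dotvDl, dotvDr, dotvNl, dotvNr) (dotvC b a).
by field.
Qed.

Local Open Scope classical_set_scope.
Local Open Scope ring_scope.

Theorem theorem1 (R : realType) (M N P : nat) (Phi : 'M[R]_(M, N))
  (L : 'M[R]_(N, P)) (f : 'cV[R]_P -> R) (y : 'cV[R]_M) (lam : R)
  (xs : 'cV[R]_N) (PT : 'M[R]_P) (e : 'cV[R]_P) :
  is_norm f -> 0 < lam ->
  is_minimizer (objective Phi L f y lam) xs ->
  decomposable_at f (L^T *m xs) PT e ->
  (forall h : 'cV[R]_N, Phi *m h = 0 -> h != 0 ->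
     dotv (PT *m L^T *m h) e < f ((1%:M - PT) *m L^T *m h)) ->
  forall x : 'cV[R]_N, is_minimizer (objective Phi L f y lam) x -> x = xs.
Proof.
move=> [f0 fZ fD] lam0 minxs [[PTsym PTid] PTe Hsub Hdec] Hker x minx.
have fN : forall z, f (- z) = f z.
  by move=> z; rewrite -scaleN1r fZ normrN normr1 mul1r.
have eqJ : objective Phi L f y lam x = objective Phi L f y lam xs.
  by apply: le_anti; rewrite minx minxs.
have ePhi : Phi *m x = Phi *m xs.
  pose m := 2^-1 *: (x + xs).
  have Hm := minxs m.
  have rm : y - Phi *m m = 2^-1 *: ((y - Phi *m x) + (y - Phi *m xs)).
    rewrite /m -scalemxAr mulmxDr.
    move: (Phi *m x) (Phi *m xs) => u v.
    by apply/matrixP => i j; rewrite !mxE; field.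
  have fm : f (L^T *m m) <= 2^-1 * f (L^T *m x) + 2^-1 * f (L^T *m xs).
    rewrite /m -scalemxAr mulmxDr fZ ger0_norm ?invr_ge0 ?ler0n //.
    rewrite -mulrDr ler_wpM2l ?invr_ge0 ?ler0n //.
  move: Hm eqJ; rewrite /objective rm dotv_par.
  set a := y - Phi *m x; set b := y - Phi *m xs.
  move=> Hm eqJ.
  have lf := ler_wpM2l (ltW lam0) fm.
  have D0 := dotv_ge0 (a - b).
  have Dab : dotv (a - b) (a - b) = 0 by nra.
  have := dotv_eq0 _ Dab; rewrite /a /b => H.
  apply/eqP; rewrite -subr_eq0; apply/eqP.
  rewrite -[RHS]oppr0 -H; move: (Phi *m x) (Phi *m xs) => u v.
  by apply/matrixP => i j; rewrite !mxE; ring.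
have [/eqP|hne] := eqVneq (x - xs) 0; first by rewrite subr_eq0 => /eqP.
exfalso.
set h := x - xs.
have Phih : Phi *m h = 0 by rewrite mulmxBr ePhi subrr.
have := Hker (- h); rewrite !mulmxN Phih oppr0 oppr_eq0 dotvNl fN.
move=> /(_ erefl hne) HK.
set z := (1%:M - PT) *m L^T *m h.
have Q : (1%:M - PT) *m (1%:M - PT) = 1%:M - PT.
  by rewrite mulmxBl mul1mx mulmxBr mulmx1 PTid subrr subr0.
have zS : (1%:M - PT) *m z = z by rewrite /z !mulmxA Q.
have f00 : f 0 = 0 by rewrite -(scale0r (0:'cV[R]_P)) fZ normr0 mul0r.
have Ene : ([set dotv v z | v in [set v | (1%:M - PT) *m v = v /\ dual_norm f v <= 1]] !=set0)%classic.
  exists (dotv 0 z); exists 0 => //; split; first by rewrite mulmx0.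
  rewrite /dual_norm; apply: ge_sup.
    by exists (dotv (0:'cV[R]_P) 0); exists 0 => //=; rewrite f00 ler01.
  by move=> r [w _ <-]; rewrite dotv0r ler01.
have := sup_gt (x := - dotv (PT *m L^T *m h) e) Ene.
rewrite -Hdec // => /(_ HK) [r [v [vS vD] <-] Hr].
have PTv : PT *m v = 0.
  by rewrite -vS mulmxA mulmxBr mulmx1 PTid subrr mul0mx.
have : subdiff f (L^T *m xs) (e + v).
  rewrite Hsub /=; split; first by rewrite mulmxDr PTe PTv addr0.
  by rewrite mulmxDr vS mulmxBl mul1mx PTe subrr add0r.
move=> /(_ (L^T *m x)) Hg.
rewrite -mulmxBr -/h dotvDl in Hg.
have E1 : dotv e (L^T *m h) = dotv (PT *m L^T *m h) e.
  by rewrite -{1}PTe dotv_mull PTsym mulmxA dotvC.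
have E2 : dotv v (L^T *m h) = dotv v z.
  by rewrite -{1}vS dotv_mull linearB /= trmx1 PTsym mulmxA.
have Hf : f (L^T *m xs) < f (L^T *m x) by lra.
have := minx xs; rewrite /objective ePhi lerD2l ler_pM2l //.
by rewrite leNgt Hf.
Qed.
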